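(* Fix integers $t\ge 1$, $C_1,\dots,C_t\ge 1$, and $A_1,\dots,A_t$ with $0\le A_i\le C_i/2$ for all $i$. Let $S$ be the multiset of positive integers defined as follows: for each $i=1,\dots,t$, $S$ contains one copy of each positive integer congruent to $A_i$ modulo $C_i$ and, separately, one copy of each positive integer congruent to $-A_i$ modulo $C_i$, all these copies being regarded as distinct elements. (In particular, if $A_i\equiv -A_i \pmod{C_i}$, i.e. $A_i=0$ or $A_i=C_i/2$, that residue class contributes two distinct copies of each of its positive elements.) Let $D_S(N)$ be the number of partitions of $N$ into distinct elements of $S$, where, if no $A_i$ equals $0$, only partitions with an odd number of parts are counted. Let $r=\max(z,1)-1$, where $z$ is the number of indices $i$ with $A_i=0$. Then for every integer $N\ge 1$, $2^{r}\cdot D_S(N)$ equals the number of tuples $(\nu_1,\dots,\nu_t;d_1,\dots,d_t)$ with $\nu_i\in P$ and $d_i\in\mathbb Z$ for all $i$, $\sum_{i=1}^t d_i$ odd, and $$\sum_{i=1}^{t}C_i|\nu_i|+\sum_{i=1}^{t}C_i\binom{d_i}{2}+\sum_{i=1}^{t}A_i d_i=N.$$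
   Context: $P$ denotes the set of all integer partitions into positive parts (including the empty partition $\emptyset$, the unique partition of $0$); for a partition $\lambda$, $|\lambda|$ is the sum of its parts. For $d\in\mathbb Z$, $\binom{d}{2}=d(d-1)/2$. A partition of $N$ into distinct elements of a multiset $S$ is a finite set of distinct elements of $S$ (distinct copies of the same integer count as distinct elements) whose values sum to $N$. *)

(* Defs.v *)
From mathcomp Require Import all_boot all_order all_algebra.
Set Implicit Arguments. Unset Strict Implicit. Unset Printing Implicit Defensive.
Import GRing.Theory Num.Theory.

(* Elements of the multiset S with value <= N: a triple (i, s, m) stands for the
   copy of the positive integer m coming from the class A_i mod C_i (s = false)
   or from the class -A_i mod C_i (s = true).  Distinct triples = distinct copies. *)
Definition Selt (t N : nat) := ('I_t * bool * 'I_N.+1)%type.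

Definition selt_val t N (e : Selt t N) : nat := nat_of_ord e.2.

Definition in_S t (C A : 'I_t -> nat) N (e : Selt t N) : bool :=
  let: (i, s, m) := e in
  (0 < m) &&
  (if s then (m + A i) %% C i == 0 else m %% C i == A i %% C i).

(* D_S(N): partitions of N into distinct elements of S; if no A_i = 0, only
   those with an odd number of parts. (Every part of such a partition is <= N.) *)
Definition DS t (C A : 'I_t -> nat) (N : nat) : nat :=
  #|[set X : {set Selt t N} |
      [&& X \subset @in_S t C A N,
          \sum_(e in X) @selt_val t N e == N &
          [forall i, A i != 0] ==> odd #|X| ]]|.

Definition is_partition (s : seq nat) : bool := sorted geq s && all (fun x => 0 < x) s.

Definition binom2 (d : int) : int := ((d * (d - 1)) %/ 2)%Z.

Definition rpar t (A : 'I_t -> nat) : nat := (maxn #|[pred i | A i == 0]| 1).-1.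

Definition tuple_ok t (C A : 'I_t -> nat) (N : nat)
    (x : {ffun 'I_t -> seq nat} * {ffun 'I_t -> int}) : Prop :=
  [/\ forall i, is_partition (x.1 i),
      odd `|(\sum_(i < t) x.2 i)%R|%N &
      (\sum_(i < t) (Posz (C i) * Posz (sumn (x.1 i))
                     + Posz (C i) * binom2 (x.2 i) + Posz (A i) * x.2 i))%R = Posz N ].

(* Main.v *)
Require Import Defs.
From mathcomp Require Import all_boot all_order all_algebra.
From mathcomp Require Import zify ring.
Set Implicit Arguments. Unset Strict Implicit. Unset Printing Implicit Defensive.
Import Order.TTheory GRing.Theory Num.Theory.

Module Aux.
Local Open Scope ring_scope.

Fixpoint Mset (nu : seq nat) (d : int) (z : int) : bool :=
  if nu is a :: nu' then (z == a%:Z + d - 1) || Mset nu' (d - 1) z else (z < d).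

Lemma part_cons a nu : is_partition (a :: nu) ->
  [/\ (0 < a)%N, is_partition nu & (head 0%N nu <= a)%N].
Proof.
rewrite /is_partition /= => /andP[hs /andP[ha hall]].
split => //; first by rewrite hall (path_sorted hs).
by case: nu hs {hall} => //= b nu /andP[].
Qed.

Lemma part_behead nu : is_partition nu -> is_partition (behead nu).
Proof. by case: nu => // a nu /part_cons[]. Qed.

Lemma head_le_behead nu : is_partition nu -> (head 0%N (behead nu) <= head 0%N nu)%N.
Proof. by case: nu => // a nu /part_cons[]. Qed.

Lemma M_top nu d : Mset nu d ((head 0%N nu)%:Z + d - 1).
Proof. case: nu => [|a nu] /=; [lia | by rewrite eqxx]. Qed.

Lemma M_max nu d z : is_partition nu -> Mset nu d z -> z <= (head 0%N nu)%:Z + d - 1.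
Proof.
elim: nu d => [|a nu IH] d /=; first by move=> _; lia.
move=> /part_cons [ha hp hh] /orP[/eqP->|hm]; first by [].
have := IH _ hp hm. lia.
Qed.

Lemma M_low nu d z : z < d - (size nu)%:Z -> Mset nu d z.
Proof.
elim: nu d => [|a nu IH] d /=; first by lia.
move=> h; apply/orP; right; apply: IH; lia.
Qed.

Lemma M_split nu d z : Mset nu d z = (z == (head 0%N nu)%:Z + d - 1) || Mset (behead nu) (d - 1) z.
Proof.
case: nu => [|a nu] //=.
apply/idP/idP; first by move=> h; apply/orP; case: (z =P d - 1) => [->|hne]; [left|right]; lia.
by case/orP => [/eqP ->|]; lia.
Qed.

Lemma M_inj_aux n nu mu d e : (size nu + size mu <= n)%N ->
  is_partition nu -> is_partition mu -> (forall z, Mset nu d z = Mset mu e z) ->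
  nu = mu /\ d = e.
Proof.
elim: n nu mu d e => [|n IH] nu mu d e hs hnu hmu heq.
  case: nu hs hnu heq => [|//]; case: mu hmu => [|//] _ _ _ heq.
  have h1 : d - 1 < e by rewrite -[_ < e]/(Mset [::] e _) -heq /=; lia.
  have h2 : e - 1 < d by rewrite -[_ < d]/(Mset [::] d _) heq /=; lia.
  split => //; lia.
have t1 := M_top nu d; have t2 := M_top mu e.
have m1 := M_max hnu; have m2 := M_max hmu.
have hmax : (head 0%N nu)%:Z + d = (head 0%N mu)%:Z + e.
  have a1 := m1 d _ (etrans (heq _) t2).
  have a2 := m2 e _ (etrans (esym (heq _)) t1). clear -a1 a2; lia.
have hbnu := part_behead hnu.
have hbmu := part_behead hmu.
have hnotin1 : ~~ Mset (behead nu) (d - 1) ((head 0%N nu)%:Z + d - 1).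
  apply/negP => /(M_max hbnu) h. have := head_le_behead hnu. clear -h; lia.
have hnotin2 : ~~ Mset (behead mu) (e - 1) ((head 0%N mu)%:Z + e - 1).
  apply/negP => /(M_max hbmu) h. have := head_le_behead hmu. clear -h; lia.
have heq' : forall z, Mset (behead nu) (d - 1) z = Mset (behead mu) (e - 1) z.
  move=> z; have := heq z; rewrite (M_split nu d z) (M_split mu e z).
  have -> : (head 0%N mu)%:Z + e - 1 = (head 0%N nu)%:Z + d - 1 by clear -hmax; lia.
  case: (z =P (head 0%N nu)%:Z + d - 1) => [->|_] //=.
  rewrite (negbTE hnotin1). have -> : (head 0%N nu)%:Z + d - 1 = (head 0%N mu)%:Z + e - 1 by clear -hmax; lia.
  by rewrite (negbTE hnotin2).
case: nu mu hs hnu hmu heq hmax heq' hbnu hbmu {t1 t2 m1 m2 hnotin1 hnotin2} => [|a nu] [|b mu] /= hs hnu hmu heq hmax heq' hbnu hbmu.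
- split => //; clear -hmax; lia.
- have [] := IH [::] mu (d - 1) (e - 1) _ hbnu hbmu heq' => //=.
  move=> hmu0 hde; subst mu. move: hmu => /part_cons[hb _ _]. clear -hb hmax hde; lia.
- have [] := IH nu [::] (d - 1) (e - 1) _ hbnu hbmu heq' => //=.
  move=> hnu0 hde; subst nu. move: hnu => /part_cons[hb _ _]. clear -hb hmax hde; lia.
- have [] := IH nu mu (d - 1) (e - 1) _ hbnu hbmu heq'; first by clear -hs; lia.
  move=> -> hde. have hab : a = b by clear -hde hmax; lia. subst b. split => //; clear -hde; lia.
Qed.

Lemma M_inj nu mu d e : is_partition nu -> is_partition mu ->
  (forall z, Mset nu d z = Mset mu e z) -> nu = mu /\ d = e.
Proof. exact: (@M_inj_aux (size nu + size mu)). Qed.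

Lemma count_rem_one (p : pred nat) k s : uniq s -> k \in s -> p k ->
  count p s = (count (fun j => (j != k) && p j) s).+1.
Proof.
elim: s => //= x s IH /andP[hx hu]; rewrite inE => hks pk.
case: (k =P x) => [ekx|nkx].
  subst k. rewrite eqxx pk /= add1n; congr (_.+1).
  apply: eq_in_count => j hj /=; case: (j =P x) hj => [->|] //.
  by rewrite (negbTE hx).
have hk : k \in s by move: hks; case: eqP.
have -> := IH hu hk pk. rewrite addnS; congr (_.+1); congr (_ + _)%N.
by case: (x =P k) => [exk|] //=; subst x.
Qed.

Definition qfun (B : nat) (P : int -> bool) := fun j : nat => P (j%:Z - B%:Z).

Lemma M_surj_aux (B : nat) n : forall P : int -> bool,
  leq (count (qfun B P) (iota 0 (2 * B))).+1 n ->
  (forall z, z <= - B%:Z -> P z) -> (forall z, B%:Z <= z -> ~~ P z) ->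
  exists nu d, is_partition nu /\ forall z, P z = Mset nu d z.
Proof.
elim: n => [//|n IH] P hc hlo hhi.
pose q := qfun B P.
have exq : exists j, q j by exists 0%N; rewrite /q /qfun; apply: hlo; lia.
have ubq : forall j, q j -> (j <= 2 * B)%N.
  move=> j qj; rewrite leqNgt; apply/negP => hj.
  by have := hhi (j%:Z - B%:Z) ltac:(lia); rewrite /q /qfun in qj; rewrite qj.
case: (ex_maxnP exq ubq) => k qk kmax.
pose e := k%:Z - B%:Z.
have Pe : P e by [].
have emax : forall z, P z -> z <= e.
  move=> z Pz; case: (lerP z (- B%:Z)) => hz; first by rewrite /e; lia.
  have hzB : 0 <= z + B%:Z by lia.
  have := kmax (absz (z + B%:Z)); rewrite /q /qfun.
  have -> : `|z + B%:Z|%:Z - B%:Z = z by lia.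
  move=> /(_ Pz) hle; rewrite /e; lia.
have eB : - B%:Z <= e by rewrite /e; lia.
have eB2 : e < B%:Z by rewrite ltNge; apply: contraTN Pe; apply: hhi.
case hg: [forall j : 'I_(2 * B), ((j%:Z - B%:Z) < e) ==> P (j%:Z - B%:Z)].
  exists [::], (e + 1); split => // z /=.
  apply/idP/idP => [/emax hz|hz]; first by lia.
  case: (lerP z (- B%:Z)) => hzl; first exact: hlo.
  case: (z =P e) => [->//|hne].
  have hj : leq (absz (z + B%:Z)).+1 (2 * B) by lia.
  move/forallP: hg => /(_ (Ordinal hj)) /=.
  have -> : `|z + B%:Z|%:Z - B%:Z = z by lia.
  move/implyP; apply; lia.
move/negbT: hg; rewrite negb_forall => /existsP [j]; rewrite negb_imply => /andP[hje hPj].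
pose qq := j%:Z - B%:Z.
have qqB : - B%:Z < qq by rewrite ltNge; apply: contra hPj => h; apply: hlo.
pose P' := fun z => (z != e) && P z.
have [nu' [d' [hp' hM']]] : exists nu d, is_partition nu /\ forall z, P' z = Mset nu d z.
  apply: IH; last first.
  - by move=> z hz; rewrite /P' negb_and hhi ?orbT.
  - move=> z hz; rewrite /P' hlo // andbT; apply/eqP => hze; move: hz; rewrite hze; lia.
  move: hc; rewrite -/q (@count_rem_one q k); first last.
  - exact: qk.
  - rewrite mem_iota; apply/andP; split => //; lia.
  - exact: iota_uniq.
  move=> hc'; suff -> : count (qfun B P') (iota 0 (2*B)) = count (fun j0 => (j0 != k) && q j0) (iota 0 (2*B)) by [].
  apply: eq_in_count => i hi; rewrite /P' /q /qfun /=; congr (_ && _).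
  by apply/idP/idP; apply: contra => /eqP h; apply/eqP; rewrite /e in h; lia.
set h := head 0%N nu'.
have htop : h%:Z + d' - 1 < e.
  have : P' (h%:Z + d' - 1) by rewrite hM' M_top.
  by rewrite /P' => /andP[hne /emax]; rewrite le_eqVlt (negbTE hne).
have hpos : 1 <= e - d'.
  case: nu' hp' hM' @h htop => [|b nu'] hp' hM' /= htop.
    have : ~~ P' qq by rewrite /P' negb_and hPj orbT.
    rewrite hM' /= -leNgt => hq; rewrite /qq in hje. lia.
  move: hp' => /part_cons[hb _ _]. lia.
exists ((absz (e - d')) :: nu'), (d' + 1); split.
  rewrite /is_partition /=; apply/andP; split.
  - move: hp' htop; rewrite /is_partition /h; clear h; case: nu' {hM' hpos} => [|b nu'] //= /andP[-> _] ht.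
    rewrite andbT; rewrite /geq /=; lia.
  - apply/andP; split; first by lia.
    by move: hp' => /andP[].
move=> z /=; have -> : d' + 1 - 1 = d' by lia.
rewrite -hM' /P'.
have -> : `|e - d'|%:Z + (d' + 1) - 1 = e by lia.
by case: (z =P e) => [->|]; rewrite ?Pe.
Qed.

Lemma M_surj (B : nat) (P : int -> bool) :
  (forall z, z <= - B%:Z -> P z) -> (forall z, B%:Z <= z -> ~~ P z) ->
  exists nu d, is_partition nu /\ forall z, P z = Mset nu d z.
Proof. exact: (@M_surj_aux B (count (qfun B P) (iota 0 (2 * B))).+1). Qed.

Lemma binom2_2 d : binom2 d * 2 = d * (d - 1).
Proof.
rewrite /binom2.
have hd := divz_eq d 2.
have hr0 : 0 <= (d %% 2)%Z by apply: modz_ge0.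
have hr1 : (d %% 2)%Z < 2 by apply: ltz_pmod.
set q := (d %/ 2)%Z in hd *; set r := (d %% 2)%Z in hd hr0 hr1 *; clearbody q r.
have [hr|hr] : r = 0 \/ r = 1 by lia.
all: rewrite hr in hd.
- have -> : d * (d - 1) = 2 * (q * (2 * q - 1)) by rewrite hd; ring.
  by rewrite mulKz // mulrC.
- have -> : d * (d - 1) = 2 * (q * (2 * q + 1)) by rewrite hd; ring.
  by rewrite mulKz // mulrC.
Qed.

Lemma Cbinom2 (C d : int) : C * binom2 d * 2 = C * (d * (d - 1)).
Proof. by rewrite -mulrA binom2_2. Qed.

Lemma binom2_diff d : binom2 d - binom2 (d - 1) = d - 1.
Proof.
apply: (@mulIf _ 2) => //; rewrite mulrBl !binom2_2; ring.
Qed.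

Lemma sum_delta_z (B : nat) (e : int) (F : int -> int) : 0 <= e -> e < B%:Z ->
  \sum_(k < B) (if (k : nat)%:Z == e then F (k : nat)%:Z else 0) = F e.
Proof.
case: e => [m|//] _; rewrite ltz_nat => hm.
rewrite (bigD1 (Ordinal hm)) //= eqxx big1 ?addr0 // => k hk.
case: eqP => // /eqP; rewrite eqz_nat => /eqP hkm.
by move: hk; rewrite -val_eqE /= hkm eqxx.
Qed.

Lemma sum_delta_neg (B : nat) (e : int) (F : int -> int) : e < 0 ->
  \sum_(k < B) (if (k : nat)%:Z == e then F (k : nat)%:Z else 0) = 0.
Proof. move=> he; rewrite big1 // => k _; case: ((k : nat)%:Z =P e) => // hk; lia. Qed.

Lemma sum_cut_int (B n : nat) (F : nat -> int) : (n <= B)%N ->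
  \sum_(k < B) (if (k < n)%N then F k else 0) = \sum_(k < n) F k.
Proof. by move=> h; rewrite (big_ord_widen B F h) [RHS]big_mkcond. Qed.

Lemma sumA (A C : int) n :
  (\sum_(k < n) (A + C * (k : nat)%:Z)) * 2 = A * n%:Z * 2 + C * n%:Z * (n%:Z - 1).
Proof.
elim: n => [|n IH]; first by rewrite big_ord0; ring.
rewrite big_ord_recr /= mulrDl IH intS; ring.
Qed.

Lemma sumB (A C : int) n :
  (\sum_(k < n) (C * ((k : nat).+1)%:Z - A)) * 2 = C * n%:Z * (n%:Z + 1) - A * n%:Z * 2.
Proof.
elim: n => [|n IH]; first by rewrite big_ord0; ring.
rewrite big_ord_recr /= mulrDl IH !intS; ring.
Qed.

Definition S1 (C A : int) nu d B :=
  \sum_(k < B) (if Mset nu d (k : nat)%:Z then A + C * (k : nat)%:Z else 0).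
Definition S2 (C A : int) nu d B :=
  \sum_(k < B) (if Mset nu d (- ((k : nat).+1)%:Z) then 0 else C * ((k : nat).+1)%:Z - A).

Lemma W_base (C A : int) d (B : nat) : leq (absz d).+1 B ->
  C * binom2 d + A * d = S1 C A [::] d B + S2 C A [::] d B.
Proof.
move=> hB; rewrite /S1 /S2 /=.
case: d hB => [n|n] hB.
- rewrite (eq_bigr (fun k : 'I_B => if ((k : nat) < n)%N then A + C * (k : nat)%:Z else 0)); last first.
    by move=> k _; rewrite ltz_nat.
  rewrite (sum_cut_int (fun k : nat => A + C * k%:Z)); last by move: hB => /=; lia.
  rewrite [X in _ = _ + X]big1 ?addr0; last by move=> k _.
  apply: (@mulIf _ 2) => //; rewrite sumA mulrDl Cbinom2; ring.
- rewrite [X in _ = X + _]big1 ?add0r; last by move=> k _.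
  rewrite (eq_bigr (fun k : 'I_B => if ((k : nat) < n.+1)%N then C * ((k : nat).+1)%:Z - A else 0)); last first.
    move=> k _ /=; case: ifP => h1; case: ifP => h2 //; lia.
  rewrite (sum_cut_int (fun k : nat => C * (k.+1)%:Z - A)); last by move: hB => /=; lia.
  apply: (@mulIf _ 2) => //; rewrite sumB mulrDl Cbinom2 NegzE; ring.
Qed.

Lemma W (C A : int) nu d (B : nat) : is_partition nu ->
  leq (sumn nu + size nu + absz d).+1 B ->
  C * (sumn nu)%:Z + C * binom2 d + A * d = S1 C A nu d B + S2 C A nu d B.
Proof.
elim: nu d => [|a nu IH] d hp hB.
  by rewrite /= mulr0 add0r; apply: W_base; move: hB; rewrite /= !add0n.
move: hp => /part_cons [ha hp hh].
set e := a%:Z + d - 1.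
have hne : ~~ Mset nu (d - 1) e.
  by apply/negP => /(M_max hp) h; rewrite /e in h; lia.
have IH' := IH (d - 1) hp ltac:(move: hB => /=; lia).
have hS1 : S1 C A (a :: nu) d B = (if 0 <= e then A + C * e else 0) + S1 C A nu (d-1) B.
  rewrite /S1 /=.
  rewrite (eq_bigr (fun k : 'I_B => (if (k:nat)%:Z == e then (fun z => A + C * z) (k:nat)%:Z else 0)
       + (if Mset nu (d-1) (k:nat)%:Z then A + C * (k:nat)%:Z else 0))); last first.
    move=> k _; case: ((k:nat)%:Z =P e) => [he|] /=; last by rewrite add0r.
    by rewrite he (negbTE hne) addr0.
  rewrite big_split; congr (_ + _).
  case: (lerP 0 e) => he; first by rewrite (@sum_delta_z B e (fun z => A + C * z)) //; move: hB => /=; rewrite /e; lia.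
  exact: (@sum_delta_neg B e (fun z => A + C * z)).
have hS2 : S2 C A (a :: nu) d B = S2 C A nu (d-1) B - (if e < 0 then C * (- e) - A else 0).
  rewrite /S2 /=.
  rewrite (eq_bigr (fun k : 'I_B => (if Mset nu (d-1) (- ((k:nat).+1)%:Z) then 0 else C * ((k:nat).+1)%:Z - A)
      - (if (k:nat)%:Z == - e - 1 then (fun z => C * (z + 1) - A) (k:nat)%:Z else 0))); last first.
    move=> k _ /=; case: ((k:nat)%:Z =P -e - 1) => hk.
    - have he : - ((k:nat).+1)%:Z = e by lia.
      by rewrite he eqxx /= (negbTE hne) intS; ring.
    - have -> : (- ((k:nat).+1)%:Z == e) = false by apply/eqP; lia.
      by rewrite /= subr0.
  rewrite sumrB; congr (_ - _).
  case: (ltrP e 0) => he; last by rewrite (@sum_delta_neg B (-e-1) (fun z => C * (z + 1) - A)) //; lia.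
  rewrite (@sum_delta_z B (-e-1) (fun z => C * (z + 1) - A)); first by ring.
  - lia.
  - by move: hB => /=; rewrite /e; lia.
have hS1' : S1 C A nu (d-1) B = C * (sumn nu)%:Z + C * binom2 (d-1) + A * (d-1) - S2 C A nu (d-1) B.
  by rewrite IH' addrK.
have hb : binom2 d = binom2 (d-1) + (d - 1) by have := binom2_diff d; lia.
rewrite hS1 hS2 hS1' hb /= PoszD.
case: ifP => h1; case: ifP => h2; rewrite /e; try ring; lia.
Qed.

End Aux.
Import Aux.

Lemma reidx n K (P Q : pred nat) (h g : nat -> nat) (F : nat -> nat) :
 (forall m, (m < n)%N -> P m -> [/\ (g m < K)%N, Q (g m) & h (g m) = m]) ->
 (forall k, (k < K)%N -> Q k -> [/\ (h k < n)%N, P (h k) & g (h k) = k]) ->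
 (\sum_(m < n) (if P m then F m else 0) = \sum_(k < K) (if Q k then F (h k) else 0))%N.
Proof.
move=> H1 H2.
transitivity (\sum_(m < n) \sum_(k < K) (if ((k : nat) == g m) && P m then F m else 0))%N.
  apply: eq_bigr => m _; case Pm: (P m); last by rewrite big1 // => k _; rewrite andbF.
  have [gK _ _] := H1 m (ltn_ord m) Pm.
  rewrite (bigD1 (Ordinal gK)) //= eqxx big1 ?addn0 // => k hk; rewrite andbT.
  by case: eqP => // ek; move: hk; rewrite -val_eqE /= ek eqxx.
rewrite exchange_big /=; apply: eq_bigr => k _.
case Qk: (Q k); last first.
  rewrite big1 // => m _; case: eqP => //= ek; case Pm: (P m) => //.
  by have [_ hq _] := H1 m (ltn_ord m) Pm; rewrite -ek Qk in hq.
have [hn hP hg] := H2 k (ltn_ord k) Qk.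
rewrite (bigD1 (Ordinal hn)) //= hg eqxx hP big1 ?addn0 // => m hm.
case: eqP => //= ek; case Pm: (P m) => //.
have [_ _ hh] := H1 m (ltn_ord m) Pm.
by move: hm; rewrite -val_eqE /= ek hh eqxx.
Qed.

Lemma Posz_sum n (f : 'I_n -> nat) : Posz (\sum_(k < n) f k)%N = (\sum_(k < n) Posz (f k))%R.
Proof. by rewrite (big_morph Posz PoszD (erefl _)). Qed.

Lemma sum_shrink (B n : nat) (G : nat -> int) : (n <= B)%N -> (forall k, (n <= k)%N -> G k = 0%R) ->
  (\sum_(k < B) G k = \sum_(k < n) G k)%R.
Proof.
move=> hB hG; rewrite (big_ord_widen B G hB) [RHS]big_mkcond; apply: eq_bigr => k _.
by case: ifP => // /negbT; rewrite -leqNgt => /hG.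
Qed.

Section Comp.
Variables (c a N : nat) (nu : seq nat) (d : int).
Hypotheses (hc : 1 <= c) (ha : a.*2 <= c) (hp : is_partition nu).
Local Notation M := (Mset nu d).

Definition bndc := forall k : nat, (M k%:Z -> a + c * k <= N) /\ (~~ M (- (k.+1)%:Z)%R -> c * k.+1 - a <= N).

Definition T1 := \sum_(k < N.+1) (if M k%:Z then a + c * k else 0).
Definition T2 := \sum_(k < N.+1) (if M (- (k.+1)%:Z)%R then 0 else c * k.+1 - a).
Definition c1 := \sum_(k < N.+1) (if M k%:Z then 1 else 0).
Definition c2 := \sum_(k < N.+1) (if M (- (k.+1)%:Z)%R then 0 else 1).

Lemma low_val k : k.+1 <= c * k.+1 - a.
Proof. have : k <= c * k by rewrite leq_pmull. rewrite mulnS. lia. Qed.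

Lemma a_le k : a <= c * k.+1.
Proof. have : c <= c * k.+1 by rewrite leq_pmulr. lia. Qed.

Hypothesis hb : bndc.

Lemma bnd_pos k : N < k -> ~~ M k%:Z.
Proof. move=> hk; apply/negP => /(fun h => (hb k).1 h); have : k <= c * k by rewrite leq_pmull. lia. Qed.

Lemma bnd_neg k : N <= k -> M (- (k.+1)%:Z)%R.
Proof. move=> hk; apply/negPn/negP => /(fun h => (hb k).2 h); have := low_val k. lia. Qed.

Let Bw := maxn N.+1 (sumn nu + size nu + absz d).+1.

Lemma comp_weight : Posz (T1 + T2) = ((Posz c) * (sumn nu)%:Z + (Posz c) * binom2 d + (Posz a) * d)%R.
Proof.
rewrite (@W (Posz c) (Posz a) nu d Bw hp); last by rewrite leq_max leqnn orbT.
rewrite /S1 /S2 (@sum_shrink Bw N.+1 (fun k : nat => if M k%:Z then (Posz a + Posz c * k%:Z)%R else 0%R)); first last.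
- by move=> k hk; rewrite (negbTE (bnd_pos hk)).
- by rewrite leq_max leqnn.
rewrite (@sum_shrink Bw N.+1 (fun k : nat => if M (- (k.+1)%:Z)%R then 0%R else (Posz c * (k.+1)%:Z - Posz a)%R)); first last.
- by move=> k hk; rewrite bnd_neg // ltnW.
- by rewrite leq_max leqnn.
rewrite PoszD /T1 /T2 !Posz_sum; congr (_ + _)%R; apply: eq_bigr => k _.
  by case: ifP => // _; rewrite PoszD PoszM.
by case: ifP => // _; rewrite -subzn ?a_le // PoszM.
Qed.

Lemma comp_charge : d = (Posz c1 - Posz c2)%R.
Proof.
have := @W 0%R 1%R nu d Bw hp; rewrite leq_max leqnn orbT => /(_ isT).
rewrite !mul0r !add0r mul1r => ->.
rewrite /S1 /S2 (@sum_shrink Bw N.+1 (fun k : nat => if M k%:Z then (1 + 0 * k%:Z)%R else 0%R)); first last.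
- by move=> k hk; rewrite (negbTE (bnd_pos hk)).
- by rewrite leq_max leqnn.
rewrite (@sum_shrink Bw N.+1 (fun k : nat => if M (- (k.+1)%:Z)%R then 0%R else (0 * (k.+1)%:Z - 1)%R)); first last.
- by move=> k hk; rewrite bnd_neg // ltnW.
- by rewrite leq_max leqnn.
rewrite /c1 /c2 !Posz_sum -sumrN; congr (_ + _)%R; apply: eq_bigr => k _.
  by case: ifP => // _; rewrite mul0r addr0.
by case: ifP => // _; rewrite ?oppr0 // mul0r add0r.
Qed.

Lemma a_lt_c : a < c.
Proof. move: ha hc; rewrite -addnn; lia. Qed.

Lemma side_false (F : nat -> nat) :
  \sum_(m < N.+1) (if (0 < m) && (m %% c == a %% c) && M (m %/ c)%:Z then F m else 0)
  = \sum_(k < N.+1) (if (0 < a + c * k) && M k%:Z then F (a + c * k) else 0).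
Proof.
have hac := a_lt_c.
rewrite (@reidx N.+1 N.+1 (fun m => (0 < m) && (m %% c == a %% c) && M (m %/ c)%:Z)
   (fun k => (0 < a + c * k) && (a + c * k < N.+1) && M k%:Z) (fun k => a + c * k) (fun m => m %/ c) F).
- apply: eq_bigr => k _; case hk: (M k%:Z); rewrite ?andbF ?andbT //.
  by have h := (hb k).1 hk; rewrite ltnS h andbT.
- move=> m hm /andP[/andP[hm0 hmod] hM].
  have e : a + c * (m %/ c) = m.
    by rewrite [RHS](divn_eq m c) (eqP hmod) (modn_small hac) mulnC addnC.
  split.
  + exact: leq_ltn_trans (leq_div m c) hm.
  + by rewrite e hm0 hm.
  + exact: e.
- move=> k hk /andP[/andP[h0 hN] hM].
  have ed : (a + c * k) %/ c = k by rewrite addnC mulnC divnMDl // (divn_small hac) addn0.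
  have em : (a + c * k) %% c = a %% c by rewrite addnC mulnC modnMDl.
  split => //.
  by rewrite h0 em ed eqxx.
Qed.

Lemma side_true (F : nat -> nat) :
  \sum_(m < N.+1) (if (0 < m) && ((m + a) %% c == 0) && ~~ M (- ((m + a) %/ c)%:Z)%R then F m else 0)
  = \sum_(k < N.+1) (if M (- (k.+1)%:Z)%R then 0 else F (c * k.+1 - a)).
Proof.
have hac := a_lt_c.
rewrite (@reidx N.+1 N.+1 (fun m => (0 < m) && ((m + a) %% c == 0) && ~~ M (- ((m + a) %/ c)%:Z)%R)
   (fun k => (c * k.+1 - a < N.+1) && ~~ M (- (k.+1)%:Z)%R) (fun k => c * k.+1 - a) (fun m => ((m + a) %/ c).-1) F).
- apply: eq_bigr => k _; case hk: (M (- (k.+1)%:Z)%R) => /=; first by rewrite andbF.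
  by rewrite andbT ltnS (hb k).2 ?hk.
- move=> m hm /andP[/andP[hm0 hmod] hM].
  have e : (m + a) %/ c * c = m + a by apply: divnK.
  set q := (m + a) %/ c in e hM *.
  have hq1 : 0 < q by case: q e {hM} => [|q]; [rewrite mul0n; lia|].
  have hqm : q <= m.
    rewrite leqNgt; apply/negP => hlt.
    have : m.+1 * c <= q * c by rewrite leq_mul2r hlt orbT.
    have : m <= m * c by rewrite leq_pmulr.
    rewrite mulSn; lia.
  have e2 : c * (q.-1).+1 - a = m by rewrite prednK // mulnC e addnK.
  split.
  + lia.
  + by rewrite e2 hm /= prednK.
  + exact: e2.
- move=> k hk /andP[hN hM]; split => //.
  + have hv : 0 < c * k.+1 - a by have := low_val k; lia.
    rewrite hv subnK ?a_le //.
    by rewrite modnMr eqxx /= mulKn.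
  + by rewrite subnK ?a_le // mulKn.
Qed.

End Comp.

Section Global.
Variables (t : nat) (C A : 'I_t -> nat) (N : nat).
Hypotheses (hC : forall i, 1 <= C i) (hA : forall i, 2 * A i <= C i).

Lemma hA2 i : (A i).*2 <= C i. Proof. by rewrite -mul2n. Qed.

Definition Tup := ({ffun 'I_t -> seq nat} * {ffun 'I_t -> int})%type.
Definition Mi (x : Tup) i := Mset (x.1 i) (x.2 i).
Definition inM (x : Tup) (e : Selt t N) : bool :=
  let: (i, s, m) := e in
  if s then ~~ Mi x i (- (((m : nat) + A i) %/ C i)%:Z)%R else Mi x i (((m : nat) %/ C i)%:Z).
Definition Xof x := [set e : Selt t N | in_S C A e && inM x e].
Definition Zof x := [set i : 'I_t | (A i == 0) && Mi x i 0].
Definition bnd (x : Tup) := forall i, bndc (C i) (A i) N (x.1 i) (x.2 i).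
Definition parts (x : Tup) := forall i, is_partition (x.1 i).

Lemma sum_X (F : nat -> nat) x : parts x -> bnd x ->
  \sum_(e in Xof x) F (selt_val e) =
  \sum_i (\sum_(k < N.+1) (if (0 < A i + C i * k) && Mi x i k%:Z then F (A i + C i * k) else 0)
        + \sum_(k < N.+1) (if Mi x i (- (k.+1)%:Z)%R then 0 else F (C i * k.+1 - A i))).
Proof.
move=> hp hb.
rewrite big_mkcond /=.
transitivity (\sum_(ib : 'I_t * bool) \sum_(m : 'I_N.+1) (if (ib, m) \in Xof x then F m else 0)).
  by rewrite pair_bigA; apply: eq_bigr => -[[i b] m] _.
transitivity (\sum_i \sum_(b : bool) \sum_(m : 'I_N.+1) (if (i, b, m) \in Xof x then F m else 0)).
  by rewrite [RHS]pair_bigA; apply: eq_bigr => -[i b] _.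
apply: eq_bigr => i _; rewrite big_bool /= addnC; congr (_ + _).
- rewrite -(side_false (hC i) (hA2 i) (hp i) (hb i)); apply: eq_bigr => m _.
  by rewrite inE /in_S /inM /Mi.
- rewrite -(side_true (hC i) (hA2 i) (hp i) (hb i)); apply: eq_bigr => m _.
  by rewrite inE /in_S /inM /Mi.
Qed.

Lemma sum_Xval x : parts x -> bnd x ->
  \sum_(e in Xof x) selt_val e =
  \sum_i (T1 (C i) (A i) N (x.1 i) (x.2 i) + T2 (C i) (A i) N (x.1 i) (x.2 i)).
Proof.
move=> hp hb; rewrite (sum_X id hp hb); apply: eq_bigr => i _; congr (_ + _).
apply: eq_bigr => k _ /=; rewrite /Mi; case: (Mset _ _ _); rewrite ?andbT ?andbF //.
by case: ifP => // /negbT; rewrite -leqNgt leqn0 => /eqP ->.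
Qed.

Lemma card_XZ x : parts x -> bnd x ->
  #|Xof x| + #|Zof x| = \sum_i (c1 N (x.1 i) (x.2 i) + c2 N (x.1 i) (x.2 i)).
Proof.
move=> hp hb; rewrite -sum1_card (sum_X (fun _ => 1) hp hb).
rewrite -sum1_card [X in _ + X = _]big_mkcond /= -big_split /=; apply: eq_bigr => i _.
rewrite inE -addnA [X in _ + X]addnC addnA; congr (_ + _).
rewrite /c1 [in LHS]big_ord_recl [in RHS]big_ord_recl addnAC; congr (_ + _); last first.
  apply: eq_bigr => k _ /=. rewrite /bump /= add1n.
  have -> : 0 < A i + C i * k.+1 by have := hC i; lia.
  done.
rewrite /= muln0 addn0 /Mi.
by case: (Mset _ _ 0%:Z); case: (A i) => [|?] /=; rewrite ?andbF ?andbT.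
Qed.

Lemma odd_absz_sub (a b : nat) : odd `|(Posz a - Posz b)%R|%N = odd (a + b).
Proof.
case: (leqP a b) => h.
  have -> : `|(Posz a - Posz b)%R|%N = b - a by lia.
  by rewrite oddB // oddD addbC.
have -> : `|(Posz a - Posz b)%R|%N = a - b by lia.
by rewrite oddB ?oddD // ltnW.
Qed.

Definition Wt (x : Tup) i :=
  (Posz (C i) * Posz (sumn (x.1 i)) + Posz (C i) * binom2 (x.2 i) + Posz (A i) * x.2 i)%R.

Lemma term_le (B : nat) (G : 'I_B -> int) (j : 'I_B) :
  (forall k, 0 <= G k)%R -> (G j <= \sum_k G k)%R.
Proof. by move=> h; rewrite (bigD1 j) //= lerDl sumr_ge0. Qed.

Lemma S2_val (c a : nat) (k : nat) : a.*2 <= c -> 0 < c ->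
  (Posz c * (k.+1)%:Z - Posz a)%R = Posz (c * k.+1 - a).
Proof.
move=> h1 h2; have : c <= c * k.+1 by rewrite leq_pmulr.
move=> h3; rewrite -subzn ?PoszM //; move: h1; rewrite -addnn; lia.
Qed.

Lemma S1_ge0 (c a : nat) nu d B : (0 <= S1 (Posz c) (Posz a) nu d B)%R.
Proof. by apply: sumr_ge0 => k _; case: ifP. Qed.

Lemma S2_ge0 (c a : nat) nu d B : a.*2 <= c -> 0 < c -> (0 <= S2 (Posz c) (Posz a) nu d B)%R.
Proof. by move=> h1 h2; apply: sumr_ge0 => k _; case: ifP => // _; rewrite S2_val. Qed.

Lemma Wt_W x i B : parts x -> leq (sumn (x.1 i) + size (x.1 i) + absz (x.2 i)).+1 B ->
  Wt x i = (S1 (Posz (C i)) (Posz (A i)) (x.1 i) (x.2 i) B + S2 (Posz (C i)) (Posz (A i)) (x.1 i) (x.2 i) B)%R.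
Proof. by move=> hp hB; rewrite /Wt -(@W _ _ (x.1 i) (x.2 i) B (hp i) hB). Qed.

Lemma Wt_ge0 x i : parts x -> (0 <= Wt x i)%R.
Proof.
move=> hp; rewrite (@Wt_W x i (sumn (x.1 i) + size (x.1 i) + absz (x.2 i)).+1 hp (leqnn _)).
by apply: addr_ge0; [apply: S1_ge0 | apply: S2_ge0; [apply: hA2 | apply: hC]].
Qed.

Lemma tok_parts x : tuple_ok C A N x -> parts x.
Proof. by case. Qed.

Lemma tok_bnd x : tuple_ok C A N x -> bnd x.
Proof.
move=> tok; have hp := tok_parts tok; case: tok => _ _ hsum i k.
have WleN : (Wt x i <= Posz N)%R.
  rewrite -hsum (bigD1 i) //= lerDl; apply: sumr_ge0 => j _; exact: Wt_ge0.
set B := maxn k.+1 (sumn (x.1 i) + size (x.1 i) + absz (x.2 i)).+1.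
have hkB : k < B by rewrite leq_max leqnn.
have hW := @Wt_W x i B hp ltac:(by rewrite leq_max leqnn orbT).
split.
- move=> hM.
  pose G1 := fun j : 'I_B => if Mset (x.1 i) (x.2 i) (j : nat)%:Z then (Posz (A i) + Posz (C i) * (j : nat)%:Z)%R else 0%R.
  have hG1 : forall j, (0 <= G1 j)%R by move=> j; rewrite /G1; case: ifP => // _; rewrite -PoszM -PoszD.
  have h1 := @term_le B G1 (Ordinal hkB) hG1.
  rewrite /G1 /= hM in h1.
  have h2 := S2_ge0 (x.1 i) (x.2 i) B (hA2 i) (hC i).
  have : (Posz (A i + C i * k) <= Posz N)%R.
    rewrite PoszD PoszM; apply: le_trans WleN; rewrite hW; apply: le_trans h1 _.
    by rewrite /S1 lerDl.
  by rewrite lez_nat.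
- move=> hM.
  pose G2 := fun j : 'I_B => if Mset (x.1 i) (x.2 i) (- ((j : nat).+1)%:Z)%R then 0%R else (Posz (C i) * ((j : nat).+1)%:Z - Posz (A i))%R.
  have hG2 : forall j, (0 <= G2 j)%R.
    by move=> j; rewrite /G2; case: ifP => // _; rewrite S2_val ?hA2 ?hC.
  have h1 := @term_le B G2 (Ordinal hkB) hG2.
  rewrite /G2 /= (negbTE hM) S2_val ?hA2 ?hC // in h1.
  have h2 := S1_ge0 (C i) (A i) (x.1 i) (x.2 i) B.
  have : (Posz (C i * k.+1 - A i) <= Posz N)%R.
    apply: le_trans WleN; rewrite hW; apply: le_trans h1 _.
    by rewrite /S2 lerDr.
  by rewrite lez_nat.
Qed.

Lemma weight_sum x : parts x -> bnd x ->
  Posz (\sum_(e in Xof x) selt_val e) = (\sum_i Wt x i)%R.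
Proof.
move=> hp hb; rewrite sum_Xval // (big_morph Posz PoszD (erefl _)); apply: eq_bigr => i _.
by rewrite (comp_weight (hC i) (hA2 i) (hp i) (hb i)).
Qed.

Lemma parity x : parts x -> bnd x ->
  odd (#|Xof x| + #|Zof x|) = odd `|(\sum_(i < t) x.2 i)%R|%N.
Proof.
move=> hp hb; rewrite card_XZ //.
have -> : (\sum_(i < t) x.2 i)%R = (Posz (\sum_i c1 N (x.1 i) (x.2 i)) - Posz (\sum_i c2 N (x.1 i) (x.2 i)))%R.
  rewrite !(big_morph Posz PoszD (erefl _)) -sumrB; apply: eq_bigr => i _.
  exact: (comp_charge (hC i) (hA2 i) (hp i) (hb i)).
by rewrite odd_absz_sub big_split.
Qed.

Definition V := [set p : {set Selt t N} * {set 'I_t} |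
  [&& p.1 \subset @in_S t C A N, \sum_(e in p.1) selt_val e == N,
      p.2 \subset [set i | A i == 0] & odd (#|p.1| + #|p.2|)]].

Definition phi (x : Tup) := (Xof x, Zof x).

Lemma phi_valid x : tuple_ok C A N x -> phi x \in V.
Proof.
move=> tok; have hp := tok_parts tok; have hb := tok_bnd tok.
case: tok => _ hodd hsum.
rewrite inE /= parity // hodd andbT; apply/and3P; split.
- by apply/subsetP => e; rewrite inE => /andP[].
- by rewrite -eqz_nat weight_sum // -hsum.
- by apply/subsetP => i; rewrite !inE => /andP[].
Qed.

Lemma lowv c a k : 0 < c -> a.*2 <= c -> k < c * k.+1 - a.
Proof. move=> h1 h2; have : k <= c * k by rewrite leq_pmull. rewrite mulnS; move: h2; rewrite -addnn. lia. Qed.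

Lemma ale c a k : 0 < c -> a.*2 <= c -> a <= c * k.+1.
Proof. move=> h1 h2; have : c <= c * k.+1 by rewrite leq_pmulr. move: h2; rewrite -addnn. lia. Qed.

Lemma alt c a : 0 < c -> a.*2 <= c -> a < c.
Proof. move=> h1 h2; move: h2 h1; rewrite -addnn; lia. Qed.

Definition detM (p : {set Selt t N} * {set 'I_t}) i (z : int) : bool :=
  if (0 <= z)%R then
    if (A i == 0) && (absz z == 0) then i \in p.2
    else (A i + C i * absz z <= N) && (((i, false, inord (A i + C i * absz z)) : Selt t N) \in p.1)
  else ~~ ((C i * absz z - A i <= N) && (((i, true, inord (C i * absz z - A i)) : Selt t N) \in p.1)).

Lemma detM_correct x : bnd x -> forall i z, Mi x i z = detM (phi x) i z.
Proof.
move=> hb i z; rewrite /detM /phi /=.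
have hCi := hC i; have hAi := hA2 i; have hac := alt hCi hAi.
case: z => [k|k] /=.
- case hz: ((A i == 0) && (k == 0)).
    move/andP: hz => [/eqP hA0 /eqP ->]; by rewrite inE hA0 eqxx.
  case: (leqP (A i + C i * k) N) => hv /=.
  + have ed : (A i + C i * k) %/ C i = k by rewrite addnC mulnC divnMDl // (divn_small hac) addn0.
    have em : (A i + C i * k) %% C i = A i %% C i by rewrite addnC mulnC modnMDl.
    have vpos : 0 < A i + C i * k.
      move: hz; case: (A i) => [|a] //=; case: k {ed em hv} => [|k] //= _; have := hCi; lia.
    rewrite inE /in_S /inM /= inordK ?ltnS // vpos em eqxx ed /=.
    done.
  + apply/negP => hM; have := (hb i k).1 hM; lia.
- have hle := ale k hCi hAi.
  have hlow := lowv k hCi hAi.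
  rewrite NegzE.
  case: (leqP (C i * k.+1 - A i) N) => hv /=.
  + rewrite inE /in_S /inM /= inordK ?ltnS //.
    have -> : C i * k.+1 - A i + A i = C i * k.+1 by rewrite subnK.
    rewrite modnMr eqxx mulKn //.
    have -> : 0 < C i * k.+1 - A i by lia.
    by rewrite andbT negbK.
  + apply/negPn/negP => hM; have := (hb i k).2 hM; lia.
Qed.

Lemma phi_inj x y : tuple_ok C A N x -> tuple_ok C A N y -> phi x = phi y -> x = y.
Proof.
move=> tx ty e.
have hx := tok_bnd tx; have hy := tok_bnd ty.
have px := tok_parts tx; have py := tok_parts ty.
have h : forall i, x.1 i = y.1 i /\ x.2 i = y.2 i.
  move=> i; apply: M_inj (px i) (py i) _ => z.
  by move: (detM_correct hx i z) (detM_correct hy i z); rewrite /Mi e => -> ->.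
case: x y e h {tx ty hx hy px py} => [x1 x2] [y1 y2] /= _ h.
by congr (_, _); apply/ffunP => i; case: (h i).
Qed.

Lemma phi_surj p : p \in V -> exists x, tuple_ok C A N x /\ phi x = p.
Proof.
case: p => X Z; rewrite inE /= => /and4P [hXS hsum hZ hodd].
have ex : forall i, exists nd : seq nat * int,
    is_partition nd.1 /\ forall z, detM (X, Z) i z = Mset nd.1 nd.2 z.
  move=> i; have hCi := hC i; have hAi := hA2 i.
  have hlo : forall z, (z <= - (N.+1)%:Z)%R -> detM (X, Z) i z.
    case=> [k|k] hk; first by move: hk; rewrite /=; lia.
    rewrite /detM /=; have := lowv k hCi hAi.
    have hkN : N <= k by move: hk; rewrite NegzE; lia.
    move=> hl; apply/negP => /andP[h _]; lia.
  have hhi : forall z, ((N.+1)%:Z <= z)%R -> ~~ detM (X, Z) i z.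
    case=> [k|k] hk; last by move: hk; rewrite /=; lia.
    rewrite /detM /=.
    have hkN : N < k by move: hk; lia.
    have hk0 : (k == 0) = false by apply/negbTE; lia.
    rewrite hk0 andbF; apply/negP => /andP[h _].
    have : k <= C i * k by rewrite leq_pmull. lia.
  have [nu [d [hp hM]]] := M_surj hlo hhi.
  by exists (nu, d).
have [f hf] := fin_all_exists ex.
pose x : Tup := ([ffun i => (f i).1], [ffun i => (f i).2]).
have hMx : forall i z, Mi x i z = detM (X, Z) i z.
  by move=> i z; rewrite /Mi /x /= !ffunE; case: (hf i) => _ ->.
have hpx : parts x by move=> i; rewrite /x /= ffunE; case: (hf i).
have hbx : bnd x.
  move=> i k; rewrite /Mi -/(Mi x i _) -/(Mi x i _) !hMx /detM /=; split.
  - case: ifP => [/andP[/eqP -> /eqP ->] _|_ /andP[] //]; by rewrite muln0.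
  - by rewrite negbK => /andP[].
have hCA : forall i, A i %% C i = A i by move=> i; rewrite modn_small // (alt (hC i) (hA2 i)).
have hXx : Xof x = X.
  apply/setP => -[[i s] m]; rewrite inE /inM !hMx /detM.
  have hCi := hC i; have hAi := hA2 i; have hac := alt hCi hAi.
  case hS: (in_S C A ((i, s, m) : Selt t N)); last first.
    apply/esym/negbTE/negP => /(subsetP hXS) h; have : in_S C A ((i, s, m) : Selt t N) := h; by rewrite hS.
  move: hS; rewrite /in_S /=; case: s => /andP[hm0 hmod].
  + have e : (m + A i) %/ C i * C i = m + A i by apply: divnK.
    set q := (m + A i) %/ C i in e *.
    have hq1 : 0 < q by case: q e => [|q]; [rewrite mul0n; lia|].
    have -> : (0 <= - q%:Z)%R = false by apply/negbTE; lia.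
    have -> : absz (- q%:Z)%R = q by lia.
    have hm : C i * q - A i = m by rewrite mulnC e addnK.
    rewrite hm negbK /= (inord_val m) -ltnS ltn_ord /=.
    done.
  + have e : A i + C i * (m %/ C i) = m.
      by rewrite [RHS](divn_eq m (C i)) (eqP hmod) hCA mulnC addnC.
    rewrite /= (_ : (A i == 0) && (m %/ C i == 0) = false); last first.
      apply/negbTE/negP => /andP[/eqP ha /eqP hq]; move: e; rewrite ha hq muln0 => hm.
      by rewrite -hm in hm0.
    by rewrite e (inord_val m) -ltnS ltn_ord.
have hZx : Zof x = Z.
  apply/setP => i; rewrite inE hMx /detM /=.
  case hA0: (A i == 0) => //=.
  by apply/esym/negbTE/negP => /(subsetP hZ); rewrite inE hA0.
have hphi : phi x = (X, Z) by rewrite /phi hXx hZx.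
exists x; split => //; split => //.
- by rewrite -(parity hpx hbx) hXx hZx.
- by have := weight_sum hpx hbx; rewrite hXx (eqP hsum) => ->.
Qed.

End Global.

Section Par.
Variable T : finType.

Definition Eb (W : {set T}) (b : bool) := [set Z : {set T} | (Z \subset W) && (odd #|Z| == b)].

Lemma Eb_card_eq (W : {set T}) w b : w \in W -> #|Eb W b| = #|Eb W (~~ b)|.
Proof.
move=> hw.
pose f := fun Z : {set T} => if w \in Z then Z :\ w else w |: Z.
have fK : involutive f.
  move=> Z; rewrite /f; case hZ: (w \in Z).
    by rewrite setD11 setD1K.
  by rewrite setU11 setU1K ?hZ.
have hodd : forall Z, odd #|f Z| = ~~ odd #|Z|.
  move=> Z; rewrite /f; case hZ: (w \in Z).
    by rewrite (cardsD1 w Z) hZ /= negbK.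
  by rewrite cardsU1 hZ /=.
have hsub : forall Z, (f Z \subset W) = (Z \subset W).
  move=> Z; rewrite /f; case hZ: (w \in Z).
    apply/idP/idP => h; last by apply: subset_trans h; apply: subD1set.
    by rewrite -(setD1K hZ) subUset sub1set hw h.
  by rewrite subUset sub1set hw.
have -> : Eb W (~~ b) = f @: Eb W b.
  apply/setP => Z; rewrite !inE; apply/idP/imsetP.
    move=> /andP[h1 h2]; exists (f Z); last by rewrite fK.
    by rewrite inE hsub h1 hodd (eqP h2) negbK eqxx.
  by move=> [Y]; rewrite inE => /andP[h1 /eqP h2] ->; rewrite hsub h1 hodd h2 eqxx.
by rewrite card_imset //; apply: can_inj fK.
Qed.

Lemma Eb_sum (W : {set T}) : #|Eb W true| + #|Eb W false| = 2 ^ #|W|.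
Proof.
rewrite -card_powerset -(cardsID [set Z : {set T} | odd #|Z|] (powerset W)).
congr (_ + _); apply: eq_card => Z; rewrite !inE.
  by case: (odd _); rewrite ?andbT ?andbF.
by case: (odd _); rewrite ?andbT ?andbF.
Qed.

Lemma Eb_card (W : {set T}) b : W != set0 -> #|Eb W b| = 2 ^ (#|W|.-1).
Proof.
case/set0Pn => w hw.
have h := Eb_sum W; have e := Eb_card_eq true hw.
have hW : 0 < #|W| by apply/card_gt0P; exists w.
move: h; rewrite -(prednK hW) expnS.
case: b; last by rewrite -e /=; lia.
by rewrite e /=; lia.
Qed.

Lemma Eb_card0 b : #|Eb set0 b| = ~~ b.
Proof.
have -> : Eb set0 b = if b then set0 else [set set0].
  apply/setP => Z; case: b; rewrite !inE subset0; case: (Z =P set0) => [->|] //=; by rewrite cards0.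
by case: b; rewrite ?cards0 ?cards1.
Qed.

End Par.

Lemma cardV t (C A : 'I_t -> nat) N : #|V C A N| = 2 ^ rpar A * DS C A N.
Proof.
set W0 := [set i : 'I_t | A i == 0].
pose D' := fun X : {set Selt t N} => (X \subset @in_S t C A N) && (\sum_(e in X) selt_val e == N).
have hV : #|V C A N| = \sum_(X : {set Selt t N}) (if D' X then #|Eb W0 (~~ odd #|X|)| else 0).
  rewrite -sum1_card big_mkcond /=.
  transitivity (\sum_(X : {set Selt t N}) \sum_(Z : {set 'I_t}) (if (X, Z) \in V C A N then 1 else 0)).
    by rewrite [RHS]pair_bigA; apply: eq_bigr => -[X Z].
  apply: eq_bigr => X _; case hD: (D' X); last first.
    by rewrite big1 // => Z _; rewrite inE /=; move: hD; rewrite /D'; case: (X \subset _); case: (_ == N).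
  rewrite -sum1_card [RHS]big_mkcond /=; apply: eq_bigr => Z _.
  rewrite !inE /=; move: hD; rewrite /D' => /andP[-> ->] /=.
  by rewrite oddD; case: (odd #|X|); case: (odd #|Z|); rewrite ?andbT ?andbF.
have hDS : DS C A N = \sum_(X : {set Selt t N}) (if D' X && ([forall i, A i != 0] ==> odd #|X|) then 1 else 0).
  by rewrite /DS -sum1_card big_mkcond /=; apply: eq_bigr => X _; rewrite inE /D' andbA.
have hz : #|[pred i | A i == 0]| = #|W0| by apply: eq_card => i; rewrite /W0 !inE.
rewrite hV hDS /rpar hz.
case: (W0 =P set0) => hW.
- have hf : [forall i, A i != 0].
    apply/forallP => i; apply/negP => hi.
    have : i \in W0 by rewrite inE hi.
    by rewrite hW inE.
  rewrite hf hW cards0 /= expn0 mul1n; apply: eq_bigr => X _.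
  by rewrite Eb_card0 negbK; case: (D' X); case: (odd _).
- have hf : [forall i, A i != 0] = false.
    apply/negP => /forallP hall; apply: hW; apply/setP => i; rewrite !inE.
    by apply/negbTE; apply: hall.
  rewrite hf; have hW' : W0 != set0 by apply/eqP.
  have hpos : 0 < #|W0| by rewrite card_gt0.
  rewrite (maxn_idPl hpos) big_distrr /=; apply: eq_bigr => X _.
  rewrite Eb_card // andbT; case: (D' X) => /=; rewrite ?muln1 ?muln0 //.
Qed.

Lemma lift_seq (T U : eqType) (f : T -> U) (Q : T -> Prop) (l : seq U) :
  (forall p, p \in l -> exists x, Q x /\ f x = p) ->
  exists s : seq T, map f s = l /\ (forall x, x \in s -> Q x).
Proof.
elim: l => [|p l IH] h; first by exists [::].
have [x [hQ hx]] := h p (mem_head _ _).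
have [s [hs hQs]] := IH (fun q hq => h q (mem_behead (s := p :: l) hq)).
exists (x :: s); split; first by rewrite /= hx hs.
by move=> y; rewrite inE => /orP[/eqP ->|/hQs].
Qed.

Theorem lemma2p2 (t : nat) (C A : 'I_t -> nat)
  (ht : 1 <= t) (hC : forall i, 1 <= C i) (hA : forall i, 2 * A i <= C i)
  (N : nat) (hN : 1 <= N) :
  exists s : seq ({ffun 'I_t -> seq nat} * {ffun 'I_t -> int}),
    [/\ uniq s,
        (forall x, x \in s <-> tuple_ok C A N x) &
        2 ^ rpar A * DS C A N = size s].
Proof.
have [s [hs hQ]] := @lift_seq _ _ (@phi t C A N) (tuple_ok C A N) (enum (V C A N))
  (fun p hp => phi_surj hC hA (p := p) ltac:(by rewrite mem_enum in hp)).
exists s; split.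
- by have := enum_uniq (mem (V C A N)); rewrite -hs => /map_uniq.
- move=> x; split; first exact: hQ.
  move=> tx; have := phi_valid hC hA tx; rewrite -mem_enum -hs => /mapP [y hy hxy].
  by rewrite (phi_inj hC hA tx (hQ y hy) hxy).
- by rewrite -cardV cardE -hs size_map.
Qed.
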